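(* Let $K$ be a pathwise connected poset and fix $o\in K$. The assignment sending a $\mathrm{C}^*$-net bundle $(\mathcal A,\jmath)_K$ over $K$ to its holonomy dynamical system $(\mathcal A_o,\pi_1^o(K),\jmath_* )$ induces a bijection between isomorphism classes of $\mathrm{C}^*$-net bundles over $K$ and isomorphism classes of $\mathrm{C}^*$-dynamical systems with group $\pi_1^o(K)$ (isomorphisms of dynamical systems being ${}^*$-isomorphisms $\eta$ with $\eta\circ\alpha_g=\beta_g\circ\eta$ for all $g$). In particular, the category of $\mathrm{C}^*$-net bundles over $K$, with morphisms of the form $(\phi,\mathrm{id}_K)$, is equivalent to the category of $\mathrm{C}^*$-dynamical systems $(\mathrm A,\pi_1^o(K),\alpha)$, with morphisms the ${}^*$-morphisms $\eta:\mathrm A\to\mathrm B$ satisfying $\eta\circ\alpha_g=\beta_g\circ\eta$ for all $g\in\pi_1^o(K)$.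
   Context: Poset homotopy. Let $K$ be a poset. The $0$-simplices are the elements of $K$; for $n\ge1$ an $n$-simplex $x$ consists of $n+1$ $(n-1)$-simplices $\partial_0x,\dots,\partial_nx$ together with an element $|x|\in K$ (the support) with $|\partial_ix|\le|x|$ for all $i$. For $a\le\tilde a$, $(\tilde a a)$ denotes the $1$-simplex with $\partial_1=a$, $\partial_0=\tilde a$ and support $\tilde a$. A path $p=b_n*\cdots*b_1$ is a finite sequence of $1$-simplices with $\partial_0b_{i}=\partial_1b_{i+1}$; it goes from $\partial_1b_1$ to $\partial_0b_n$; a loop over $o$ is a path from $o$ to $o$. $K$ is pathwise connected if any two elements are joined by a path. An elementary deformation of a path replaces two consecutive $1$-simplices $\partial_0c*\partial_2c$ by $\partial_1c$, or conversely, for some $2$-simplex $c$; homotopy $\sim$ is the equivalence relation generated. $\pi_1^o(K)$ is the group of homotopy classes of loops over $o$ with $[p][q]=[p*q]$. Nets. A net of $\mathrm{C}^*$-algebras $(\mathcal A,\jmath)_K$ assigns to each $o\in K$ a unital $\mathrm{C}^*$-algebra $\mathcal A_o$ and to each $a\le o$ a unital injective ${}^*$-morphism $\jmath_{oa}:\mathcal A_a\to\mathcal A_o$ with $\jmath_{oa}\circ\jmath_{ae}=\jmath_{oe}$ for $e\le a\le o$. It is a $\mathrm{C}^*$-net bundle if all $\jmath_{oa}$ are ${}^*$-isomorphisms; then set $\jmath_{ao}:=\jmath_{oa}^{-1}$. A morphism $(\phi,\mathrm f):(\mathcal A,\jmath)_K\to(\mathcal B,\imath)_P$ is an order preserving map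 $\mathrm f:K\to P$ together with ${}^*$-morphisms $\phi_o:\mathcal A_o\to\mathcal B_{\mathrm f(o)}$ with $\phi_o\circ\jmath_{oa}=\imath_{\mathrm f(o)\mathrm f(a)}\circ\phi_a$ for $a\le o$; it is an isomorphism if $\mathrm f$ is an order isomorphism and all $\phi_o$ are ${}^*$-isomorphisms. Holonomy. For a $\mathrm{C}^*$-net bundle and a $1$-simplex $b$ set $\jmath_b:=\jmath_{\partial_0b\,|b|}\circ\jmath_{|b|\,\partial_1b}$, and for a path $p=b_n*\cdots*b_1$ set $\jmath_p:=\jmath_{b_n}\circ\cdots\circ\jmath_{b_1}$; $\jmath_p$ depends only on the homotopy class of $p$. The holonomy dynamical system is $(\mathcal A_o,\pi_1^o(K),\jmath_* )$ with $\jmath_{*,[p]}:=\jmath_p$. *)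

(* Defs.v *)
From Stdlib Require Import Relations ClassicalEpsilon.
From mathcomp Require Import all_boot all_order all_algebra.
From mathcomp Require Import reals.
From mathcomp.real_closed Require Import complex.

Set Implicit Arguments.
Unset Strict Implicit.
Unset Printing Implicit Defensive.

Import Order.TTheory GRing.Theory Num.Theory.
Local Open Scope ring_scope.

Section CStar.
Variable R : realType.
Local Notation C := (R[i]).
Local Notation normc := (@ComplexField.Normc.normc R).

Record cstar := CStar {
  cs_car :> lmodType C;
  cs_mul : cs_car -> cs_car -> cs_car;
  cs_one : cs_car;
  cs_star : cs_car -> cs_car;
  cs_norm : cs_car -> R;
  cs_mulA : forall x y z, cs_mul x (cs_mul y z) = cs_mul (cs_mul x y) z;
  cs_mul1l : forall x, cs_mul cs_one x = x;
  cs_mul1r : forall x, cs_mul x cs_one = x;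
  cs_mulDl : forall x y z, cs_mul (x + y) z = cs_mul x z + cs_mul y z;
  cs_mulDr : forall x y z, cs_mul x (y + z) = cs_mul x y + cs_mul x z;
  cs_scaleAl : forall (a : C) x y, cs_mul (a *: x) y = a *: cs_mul x y;
  cs_scaleAr : forall (a : C) x y, cs_mul x (a *: y) = a *: cs_mul x y;
  cs_starK : forall x, cs_star (cs_star x) = x;
  cs_starD : forall x y, cs_star (x + y) = cs_star x + cs_star y;
  cs_starZ : forall (a : C) x, cs_star (a *: x) = conjc a *: cs_star x;
  cs_starM : forall x y, cs_star (cs_mul x y) = cs_mul (cs_star y) (cs_star x);
  cs_norm_eq0 : forall x, cs_norm x = 0 <-> x = 0;
  cs_normD : forall x y, cs_norm (x + y) <= cs_norm x + cs_norm y;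
  cs_normZ : forall (a : C) x, cs_norm (a *: x) = normc a * cs_norm x;
  cs_normM : forall x y, cs_norm (cs_mul x y) <= cs_norm x * cs_norm y;
  cs_C_star : forall x, cs_norm (cs_mul (cs_star x) x) = cs_norm x ^+ 2;
  cs_complete : forall u : nat -> cs_car,
    (forall e : R, 0 < e -> exists N, forall m n, (N <= m)%N -> (N <= n)%N ->
        cs_norm (u m - u n) < e) ->
    exists l, forall e : R, 0 < e -> exists N, forall n, (N <= n)%N ->
        cs_norm (u n - l) < e
}.

(** *-morphisms (not necessarily unital) *)
Definition star_hom (A B : cstar) (f : A -> B) : Prop :=
  (forall (a : C) (x y : A), f (a *: x + y) = a *: f x + f y) /\
  (forall x y, f (cs_mul x y) = cs_mul (f x) (f y)) /\
  (forall x, f (cs_star x) = cs_star (f x)).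

Definition unital_map (A B : cstar) (f : A -> B) : Prop := f (cs_one A) = cs_one B.

Definition star_iso (A B : cstar) (f : A -> B) : Prop :=
  star_hom f /\ bijective f.

End CStar.

Section Poset.
Variables (d : Order.disp_t) (K : porderType d).
Local Open Scope order_scope.

Record simplex1 := Simplex1 {
  s1_d0 : K; s1_d1 : K; s1_sup : K;
  s1_d0_le : s1_d0 <= s1_sup;
  s1_d1_le : s1_d1 <= s1_sup }.

Record simplex2 := Simplex2 {
  s2_d0 : simplex1; s2_d1 : simplex1; s2_d2 : simplex1; s2_sup : K;
  s2_d0_le : s1_sup s2_d0 <= s2_sup;
  s2_d1_le : s1_sup s2_d1 <= s2_sup;
  s2_d2_le : s1_sup s2_d2 <= s2_sup;
  s2_id01 : s1_d0 s2_d0 = s1_d0 s2_d1;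
  s2_id02 : s1_d1 s2_d0 = s1_d0 s2_d2;
  s2_id12 : s1_d1 s2_d1 = s1_d1 s2_d2 }.

(** A path b_n * ... * b_1 is represented by the (nonempty) list
    [:: b_1; ...; b_n] in traversal order. *)
Fixpoint path_ft (a c : K) (s : seq simplex1) : Prop :=
  match s with
  | [::] => False
  | b :: s' => s1_d1 b = a /\
      (if s' is [::] then s1_d0 b = c else path_ft (s1_d0 b) c s')
  end.

Definition pathwise_connected : Prop := forall a c : K, exists s, path_ft a c s.

Definition is_loop (o : K) (s : seq simplex1) : Prop := path_ft o o s.

(** elementary deformation: d0c * d2c  <->  d1c *)
Definition elem_deform (p q : seq simplex1) : Prop :=
  exists (l r : seq simplex1) (c : simplex2),
    p = l ++ [:: s2_d2 c; s2_d0 c] ++ r /\ q = l ++ [:: s2_d1 c] ++ r.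

Definition homotopic : seq simplex1 -> seq simplex1 -> Prop :=
  clos_refl_sym_trans _ elem_deform.

Lemma path_ft_cat a b c s t : path_ft a b s -> path_ft b c t -> path_ft a c (s ++ t).
Proof.
move=> Hs Ht; elim: s a Hs => [//|x s IH] a /= [-> H]; split=> //.
case: s IH H => [|y s] IH H /=.
  by rewrite H; destruct t.
exact: (IH _ H).
Qed.

Definition hclass (o : K) (p : seq simplex1) : seq simplex1 -> Prop :=
  fun q => is_loop o q /\ homotopic p q.

Definition pi1 (o : K) : Type :=
  {X : seq simplex1 -> Prop | exists p, is_loop o p /\ X = hclass o p}.

Definition pi1_repr (o : K) (g : pi1 o) : seq simplex1 :=
  proj1_sig (constructive_indefinite_description _ (proj2_sig g)).

Lemma pi1_repr_loop o (g : pi1 o) : is_loop o (pi1_repr g).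
Proof.
rewrite /pi1_repr; case: constructive_indefinite_description => p [] //.
Qed.

(** [g][h] = [g * h]; in traversal order  g * h  is  repr h ++ repr g *)
Definition pi1_mul (o : K) (g h : pi1 o) : pi1 o.
Proof.
exists (hclass o (pi1_repr h ++ pi1_repr g)).
exists (pi1_repr h ++ pi1_repr g); split=> //.
exact: path_ft_cat (pi1_repr_loop h) (pi1_repr_loop g).
Defined.

Variable R : realType.

Record netbundle := NetBundle {
  nb_A : K -> cstar R;
  nb_j : forall o a : K, a <= o -> nb_A a -> nb_A o;
  nb_j_hom : forall o a (h : a <= o), star_hom (nb_j h);
  nb_j_unital : forall o a (h : a <= o), unital_map (nb_j h);
  nb_j_bij : forall o a (h : a <= o), bijective (nb_j h);
  nb_j_comp : forall o a e (h1 : e <= a) (h2 : a <= o) (h3 : e <= o) x,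
      nb_j h2 (nb_j h1 x) = nb_j h3 x }.

Arguments nb_j n {o a} _ _.
Section Holonomy.
Variable N : netbundle.
Local Notation F := (fun o => (nb_A N o : Type)).

Lemma bij_surj (T U : Type) (f : T -> U) : bijective f -> forall y, exists x, f x = y.
Proof. by case=> g _ fK y; exists (g y); rewrite fK. Qed.

Definition nb_jinv (o a : K) (h : a <= o) (y : F o) : F a :=
  proj1_sig (constructive_indefinite_description _ (bij_surj (nb_j_bij N h) y)).

Definition hol1 (b : simplex1) (x : F (s1_d1 b)) : F (s1_d0 b) :=
  nb_jinv (s1_d0_le b) (nb_j N (s1_d1_le b) x).

(** action of a 1-simplex on elements of the total space {o & A_o};
    elements not lying over d1 b are left unchanged (never happens
    along a path). *)
Definition hol1_tag (b : simplex1) (u : {o : K & F o}) : {o : K & F o} :=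
  if tag u == s1_d1 b then
    Tagged F (hol1 (tagged_as (Tagged F (0 : nb_A N (s1_d1 b))) u))
  else u.

Definition hol_path (p : seq simplex1) (u : {o : K & F o}) : {o : K & F o} :=
  foldl (fun v b => hol1_tag b v) u p.

Definition holonomy (o : K) (g : pi1 o) (x : F o) : F o :=
  tagged_as (Tagged F x) (hol_path (pi1_repr g) (Tagged F x)).

End Holonomy.

(** morphisms of net bundles of the form (phi, id_K) *)
Definition nb_morph (N M : netbundle)
    (phi : forall o, nb_A N o -> nb_A M o) : Prop :=
  (forall o, star_hom (phi o)) /\
  (forall o a (h : a <= o) x, phi o (nb_j N h x) = nb_j M h (phi a x)).

Definition nb_iso (N M : netbundle) : Prop :=
  exists phi : forall o, nb_A N o -> nb_A M o,
    nb_morph phi /\ forall o, bijective (phi o).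

Definition is_dynsys (o : K) (A : cstar R) (alpha : pi1 o -> A -> A) : Prop :=
  (forall g, star_iso (alpha g)) /\
  (forall g h x, alpha (pi1_mul g h) x = alpha g (alpha h x)).

Definition dyn_morph (o : K) (A B : cstar R) (alpha : pi1 o -> A -> A)
    (beta : pi1 o -> B -> B) (eta : A -> B) : Prop :=
  star_hom eta /\ forall g x, eta (alpha g x) = beta g (eta x).

Definition dyn_iso (o : K) (A B : cstar R) (alpha : pi1 o -> A -> A)
    (beta : pi1 o -> B -> B) : Prop :=
  exists eta : A -> B, dyn_morph alpha beta eta /\ bijective eta.

End Poset.

Arguments holonomy {d K R} N o g x.
Arguments nb_morph {d K R} N M phi.

(* Main.v *)
Require Import Defs.
From mathcomp Require Import all_boot all_order all_algebra.
From mathcomp Require Import reals.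
From mathcomp.real_closed Require Import complex.
From Stdlib Require Import Relations ClassicalEpsilon FunctionalExtensionality PropExtensionality ProofIrrelevance.

Set Implicit Arguments.
Unset Strict Implicit.
Unset Printing Implicit Defensive.
Import Order.TTheory GRing.Theory Num.Theory.

Section Alg.
Variable R : realType.
Local Open Scope ring_scope.

Lemma star_hom_id (A : cstar R) : star_hom (@id A).
Proof. by split; [|split]. Qed.

Lemma star_hom_comp (A B C : cstar R) (f : A -> B) (g : B -> C) :
  star_hom f -> star_hom g -> star_hom (g \o f).
Proof.
move=> [f1 [f2 f3]] [g1 [g2 g3]]; split; [|split] => * /=.
- by rewrite f1 g1.
- by rewrite f2 g2.
- by rewrite f3 g3.
Qed.

Lemma star_hom_inv (A B : cstar R) (f : A -> B) (g : B -> A) :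
  star_hom f -> cancel f g -> cancel g f -> star_hom g.
Proof.
move=> [f1 [f2 f3]] fK gK; have fI := can_inj fK.
split; [|split] => *; apply: fI.
- by rewrite f1 !gK.
- by rewrite f2 !gK.
- by rewrite f3 !gK.
Qed.

Lemma star_iso_id (A : cstar R) : star_iso (@id A).
Proof. split; [exact: star_hom_id| by exists id]. Qed.

Lemma star_iso_comp (A B C : cstar R) (f : A -> B) (g : B -> C) :
  star_iso f -> star_iso g -> star_iso (g \o f).
Proof.
move=> [hf bf] [hg bg]; split; [exact: star_hom_comp|exact: bij_comp].
Qed.

Lemma star_iso_inv (A B : cstar R) (f : A -> B) (g : B -> A) :
  star_iso f -> cancel f g -> cancel g f -> star_iso g.
Proof.
move=> [hf _] fK gK; split; [exact: star_hom_inv hf fK gK|].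
by exists f.
Qed.

Lemma star_iso_ext (A B : cstar R) (f g : A -> B) :
  (forall x, f x = g x) -> star_iso f -> star_iso g.
Proof. by move=> /functional_extensionality ->. Qed.

Lemma iso_unital (A B : cstar R) (f : A -> B) :
  star_hom f -> bijective f -> f (cs_one A) = cs_one B.
Proof.
move=> [_ [f2 _]] [g fK gK].
have E : cs_mul (f (cs_one A)) (f (g (cs_one B))) = f (g (cs_one B)).
  by rewrite -f2 cs_mul1l.
by move: E; rewrite gK cs_mul1r.
Qed.

End Alg.

Section Paths.
Variables (d : Order.disp_t) (K : porderType d).
Local Open Scope order_scope.
Implicit Types (a b c : K) (s p q l r : seq (simplex1 K)).

Definition deg (a : K) : simplex1 K := @Simplex1 d K a a a (lexx a) (lexx a).
Definition flip (b : simplex1 K) : simplex1 K :=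
  @Simplex1 d K (s1_d1 b) (s1_d0 b) (s1_sup b) (s1_d1_le b) (s1_d0_le b).
Definition edge a b (h : a <= b) : simplex1 K := @Simplex1 d K b a b (lexx b) h.

Fixpoint pathK a s : bool :=
  if s is x :: s' then (s1_d1 x == a) && pathK (s1_d0 x) s' else true.
Definition endp a s : K := last a (map (@s1_d0 d K) s).

Lemma endp_cons a x s : endp a (x :: s) = endp (s1_d0 x) s.
Proof. by []. Qed.

Lemma pathftE a c s : path_ft a c s <-> [/\ ~~ nilp s, pathK a s & endp a s = c].
Proof.
elim: s a => [|x s IH] a /=; first by split=> // -[].
rewrite endp_cons; case: s IH => [|y s] IH /=.
  split; first by case=> -> ->; rewrite eqxx.
  by case=> _ /andP[/eqP -> _] <-.
split.
  by case=> -> /IH [_ H1 H2]; rewrite eqxx.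
by case=> _ /andP[/eqP -> H1] H2; split=> //; apply/IH.
Qed.

Lemma pathK_cat a s t : pathK a (s ++ t) = pathK a s && pathK (endp a s) t.
Proof.
elim: s a => [|x s IH] a //=; by rewrite IH andbA.
Qed.

Lemma endp_cat a s t : endp a (s ++ t) = endp (endp a s) t.
Proof. by rewrite /endp map_cat last_cat. Qed.

Definition revpath s := rev (map flip s).

Lemma revpath_cons x s : revpath (x :: s) = revpath s ++ [:: flip x].
Proof. by rewrite /revpath /= rev_cons cats1. Qed.

Lemma flipK : involutive flip.
Proof. by case=> ? ? ? ? ?. Qed.

Lemma revpathK : involutive revpath.
Proof.
move=> s; rewrite /revpath map_rev revK -map_comp.
by rewrite (eq_map flipK) map_id.
Qed.

Lemma pathK_rev a s : pathK a s ->
  pathK (endp a s) (revpath s) /\ endp (endp a s) (revpath s) = a.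
Proof.
elim: s a => [|x s IH] a //= /andP[/eqP <- Hs].
rewrite endp_cons revpath_cons pathK_cat endp_cat.
have [H1 H2] := IH _ Hs; rewrite H1 H2 /= eqxx.
by [].
Qed.

Lemma elem_ctx l r p q : elem_deform p q -> elem_deform (l ++ p ++ r) (l ++ q ++ r).
Proof.
case=> l' [r'] [c] [-> ->]; exists (l ++ l'), (r' ++ r), c.
by rewrite !catA -!catA.
Qed.

Lemma hom_refl p : homotopic p p. Proof. exact: rst_refl. Qed.
Lemma hom_sym p q : homotopic p q -> homotopic q p. Proof. exact: rst_sym. Qed.
Lemma hom_trans p q r : homotopic p q -> homotopic q r -> homotopic p r.
Proof. exact: rst_trans. Qed.

Lemma hom_ctx l r p q : homotopic p q -> homotopic (l ++ p ++ r) (l ++ q ++ r).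
Proof.
elim=> {p q} [p q H| p| p q _ IH| p q t _ IH1 _ IH2].
- by apply: rst_step; apply: elem_ctx.
- exact: hom_refl.
- exact: hom_sym.
- exact: hom_trans IH1 IH2.
Qed.

Lemma hom_cat p p' q q' : homotopic p p' -> homotopic q q' -> homotopic (p ++ q) (p' ++ q').
Proof.
move=> H1 H2; apply: (@hom_trans _ (p' ++ q)).
  by have := hom_ctx [::] q H1; rewrite /=.
by have := hom_ctx p' [::] H2; rewrite !cats0.
Qed.

Lemma hom_elem (c : simplex2 K) : homotopic [:: s2_d2 c; s2_d0 c] [:: s2_d1 c].
Proof. by apply: rst_step; exists [::], [::], c. Qed.

Lemma hom_elem_ctx l r (c : simplex2 K) :
  homotopic (l ++ s2_d2 c :: s2_d0 c :: r) (l ++ s2_d1 c :: r).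
Proof. exact: (hom_ctx l r (hom_elem c)). Qed.

Lemma hom_bflip l r x : homotopic (l ++ x :: flip x :: r) (l ++ deg (s1_d1 x) :: r).
Proof.
exact: (hom_elem_ctx l r (@Simplex2 d K (flip x) (deg (s1_d1 x)) x (s1_sup x)
  (lexx _) (s1_d1_le x) (lexx _) erefl erefl erefl)).
Qed.

Lemma hom_degr l r x : homotopic (l ++ x :: deg (s1_d0 x) :: r) (l ++ x :: r).
Proof.
exact: (hom_elem_ctx l r (@Simplex2 d K (deg (s1_d0 x)) x x (s1_sup x)
  (s1_d0_le x) (lexx _) (lexx _) erefl erefl erefl)).
Qed.

Lemma hom_degl l r x : homotopic (l ++ deg (s1_d1 x) :: x :: r) (l ++ x :: r).
Proof.
exact: (hom_elem_ctx l r (@Simplex2 d K x x (deg (s1_d1 x)) (s1_sup x)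
  (lexx _) (lexx _) (s1_d1_le x) erefl erefl erefl)).
Qed.

Lemma hom_tri l r a b c (h1 : a <= b) (h2 : b <= c) (h3 : a <= c) :
  homotopic (l ++ edge h1 :: edge h2 :: r) (l ++ edge h3 :: r).
Proof.
exact: (hom_elem_ctx l r (@Simplex2 d K (edge h2) (edge h3) (edge h1) c
  (lexx _) (lexx _) h2 erefl erefl erefl)).
Qed.

Lemma hom_sup l r x (h0 : s1_d0 x <= s1_sup x) (h1 : s1_d1 x <= s1_sup x) :
  homotopic (l ++ x :: edge h0 :: r) (l ++ edge h1 :: r).
Proof.
exact: (hom_elem_ctx l r (@Simplex2 d K (edge h0) (edge h1) x (s1_sup x)
  (lexx _) (lexx _) (lexx _) erefl erefl erefl)).
Qed.

Lemma hom_cancel s : forall x l r a, pathK a s -> s1_d0 x = a ->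
  homotopic (l ++ x :: s ++ revpath s ++ r) (l ++ x :: r).
Proof.
elim: s => [|b s IH] x l r a /=; first by move=> _ _; exact: hom_refl.
move=> /andP[/eqP Eb Hs] Ex.
rewrite revpath_cons -catA /=.
have := IH b (l ++ [:: x]) (flip b :: r) _ Hs erefl.
rewrite -!catA /= => H; apply: hom_trans H _.
have := hom_bflip (l ++ [:: x]) r b; rewrite -catA /= => H2.
apply: hom_trans H2 _; rewrite Eb -Ex; rewrite -catA; exact: hom_degr.
Qed.

Lemma hom_invariants p q : homotopic p q ->
  forall a, [/\ pathK a p = pathK a q, endp a p = endp a q & nilp p = nilp q].
Proof.
elim=> {p q} [p q H| p| p q _ IH| p q t _ IH1 _ IH2] a.
- case: H => l [r] [c] [-> ->].
  rewrite !pathK_cat !endp_cat /= !endp_cons.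
  split; last by case: l.
  + case: (pathK a l) => //=.
    rewrite -(s2_id12 c) (s2_id02 c) eqxx /= (s2_id01 c).
    by case: eqP.
  + by rewrite (s2_id01 c).
- by [].
- by case: (IH a) => -> -> ->.
- by case: (IH1 a) (IH2 a) => -> -> -> [-> -> ->].
Qed.

Lemma hom_loop o p q : homotopic p q -> is_loop o p -> is_loop o q.
Proof.
move=> H; rewrite /is_loop !pathftE.
by case: (hom_invariants H o) => -> -> ->.
Qed.

End Paths.

Section Pi1.
Variables (d : Order.disp_t) (K : porderType d) (o : K).
Local Open Scope order_scope.
Implicit Types (p q l : seq (simplex1 K)).

Lemma pi1_eq (g h : pi1 o) : proj1_sig g = proj1_sig h -> g = h.
Proof.
case: g h => X HX [Y HY] /= E; subst Y; f_equal; exact: proof_irrelevance.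
Qed.

Lemma repr_spec (g : pi1 o) : is_loop o (pi1_repr g) /\ proj1_sig g = hclass o (pi1_repr g).
Proof. rewrite /pi1_repr; by case: constructive_indefinite_description => p []. Qed.

Lemma loop_deg : is_loop o [:: deg o].
Proof. by []. Qed.

Definition e0 : pi1 o := exist _ (hclass o [:: deg o]) (ex_intro _ [:: deg o] (conj loop_deg erefl)).

Definition cls l : pi1 o :=
  match excluded_middle_informative (is_loop o l) with
  | left H => exist _ (hclass o l) (ex_intro _ l (conj H erefl))
  | right _ => e0 end.

Lemma cls_val l : is_loop o l -> proj1_sig (cls l) = hclass o l.
Proof. by rewrite /cls; case: excluded_middle_informative. Qed.

Lemma hclass_hom p q : homotopic p q -> hclass o p = hclass o q.
Proof.
move=> H; apply: functional_extensionality => t; apply: propositional_extensionality.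
split; case=> L H'; split=> //.
  exact: hom_trans (hom_sym H) H'.
exact: hom_trans H H'.
Qed.

Lemma cls_hom p q : is_loop o p -> homotopic p q -> cls p = cls q.
Proof.
move=> Lp H; have Lq := hom_loop H Lp.
by apply: pi1_eq; rewrite !cls_val //; apply: hclass_hom.
Qed.

Lemma cls_repr (g : pi1 o) : g = cls (pi1_repr g).
Proof.
have [L E] := repr_spec g; apply: pi1_eq; by rewrite cls_val.
Qed.

Lemma repr_cls l : is_loop o l -> homotopic (pi1_repr (cls l)) l.
Proof.
move=> L; have [L' E] := repr_spec (cls l).
rewrite cls_val // in E.
have : hclass o l l by split=> //; exact: hom_refl.
by rewrite E => -[].
Qed.

Lemma loop_cat p q : is_loop o p -> is_loop o q -> is_loop o (p ++ q).
Proof. exact: path_ft_cat. Qed.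

Lemma mul_cls p q : is_loop o p -> is_loop o q -> pi1_mul (cls p) (cls q) = cls (q ++ p).
Proof.
move=> Lp Lq; apply: pi1_eq; rewrite cls_val /=; last exact: loop_cat.
apply: hclass_hom; apply: hom_cat; exact: repr_cls.
Qed.

Lemma repr_mul (g h : pi1 o) : homotopic (pi1_repr (pi1_mul g h)) (pi1_repr h ++ pi1_repr g).
Proof.
rewrite {1}(cls_repr g) {1}(cls_repr h) mul_cls; try exact: (proj1 (repr_spec _)).
apply: repr_cls; apply: loop_cat; exact: (proj1 (repr_spec _)).
Qed.

End Pi1.

Section Transport.
Variables (d : Order.disp_t) (K : porderType d) (R : realType) (N : netbundle K R).
Local Open Scope order_scope.
Local Notation F := (fun o => (nb_A N o : Type)).
Local Notation T := {a : K & F a}.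
Local Notation J h := (@nb_j _ _ _ N _ _ h).
Local Notation JI h := (@nb_jinv _ _ _ N _ _ h).
Local Notation hol := (@hol_path _ _ _ N).
Implicit Types (p q l : seq (simplex1 K)) (u v : T).

Lemma Tagged_inj a (x y : F a) : Tagged F x = Tagged F y -> x = y.
Proof. exact: (Eqdep_dec.inj_pair2_eq_dec _ (@eq_comparable K)). Qed.

Definition lift u (s : K) : T :=
  match Bool.bool_dec (tag u <= s) true with
  | left h => Tagged F (J h (tagged u))
  | right _ => u end.

Lemma liftE a (x : F a) s (h : a <= s) : lift (Tagged F x) s = Tagged F (J h x).
Proof.
rewrite /lift /=; destruct (Bool.bool_dec (a <= s) true) as [h'|n]; last by rewrite h in n.
by rewrite (bool_irrelevance h' h).
Qed.

Lemma lift_nle u s : ~~ (tag u <= s) -> lift u s = u.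
Proof.
rewrite /lift => /negbTE H; destruct (Bool.bool_dec (tag u <= s) true) as [h|] => //.
by rewrite h in H.
Qed.

Lemma lift_lift u a s : tag u <= a -> a <= s -> lift (lift u a) s = lift u s.
Proof.
case: u => b x /= h1 h2.
by rewrite (liftE _ h1) (liftE _ h2) (liftE _ (le_trans h1 h2)) (nb_j_comp h1 h2 (le_trans h1 h2)).
Qed.

Lemma J_inj a b (h : a <= b) : injective (J h).
Proof. exact: bij_inj (nb_j_bij N h). Qed.

Lemma jinvK a b (h : a <= b) y : J h (JI h y) = y.
Proof. by rewrite /nb_jinv; case: constructive_indefinite_description. Qed.

Lemma jinvK' a b (h : a <= b) x : JI h (J h x) = x.
Proof. apply: (@J_inj _ _ h); exact: jinvK. Qed.

Lemma lift_inj u v s : tag u = tag v -> tag u <= s -> lift u s = lift v s -> u = v.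
Proof.
case: u => a x; case: v => b y /= E; subst b => h.
by rewrite !(liftE _ h) => /Tagged_inj /J_inj ->.
Qed.

Lemma liftS u u' a s : lift u a = lift u' a -> tag u <= a -> tag u' <= a -> a <= s ->
  lift u s = lift u' s.
Proof. by move=> E H1 H2 Has; rewrite -(lift_lift H1 Has) -(lift_lift H2 Has) E. Qed.

Lemma hol1_tagE (b : simplex1 K) (x : F (s1_d1 b)) :
  hol1_tag b (Tagged F x) = Tagged F (hol1 x).
Proof. by rewrite /hol1_tag /= eqxx tagged_asE. Qed.

Lemma hol1_tag_ne b u : tag u != s1_d1 b -> hol1_tag b u = u.
Proof. by rewrite /hol1_tag => /negbTE ->. Qed.

Lemma hol1_spec b u : tag u = s1_d1 b ->
  tag (hol1_tag b u) = s1_d0 b /\ lift (hol1_tag b u) (s1_sup b) = lift u (s1_sup b).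
Proof.
case: u => a x /= E; subst a; rewrite hol1_tagE; split=> //.
by rewrite (liftE _ (s1_d0_le b)) (liftE _ (s1_d1_le b)) /hol1 jinvK.
Qed.

Lemma hol_cat p q u : hol (p ++ q) u = hol q (hol p u).
Proof. exact: foldl_cat. Qed.

Lemma hol_tag p u : pathK (tag u) p -> tag (hol p u) = endp (tag u) p.
Proof.
elim: p u => [|b p IH] u //= /andP[/eqP E Hp].
have [t1 _] := hol1_spec (esym E).
by rewrite endp_cons IH t1 // -t1.
Qed.

Lemma hol_tri (c : simplex2 K) v : tag v = s1_d1 (s2_d2 c) ->
  hol1_tag (s2_d0 c) (hol1_tag (s2_d2 c) v) = hol1_tag (s2_d1 c) v.
Proof.
move=> Ev.
have [t1 l1] := hol1_spec Ev.
have [t2 l2] := hol1_spec (u := hol1_tag (s2_d2 c) v) (b := s2_d0 c) (etrans t1 (esym (s2_id02 c))).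
have [t3 l3] := hol1_spec (b := s2_d1 c) (u := v) (etrans Ev (esym (s2_id12 c))).
apply: (lift_inj (s := s2_sup c)).
- by rewrite t2 t3 s2_id01.
- rewrite t2; exact: le_trans (s1_d0_le _) (s2_d0_le c).
rewrite (liftS l2); first last.
- exact: s2_d0_le.
- by rewrite t1 -s2_id02 s1_d1_le.
- by rewrite t2 s1_d0_le.
rewrite (liftS l1); first last.
- exact: s2_d2_le.
- by rewrite Ev s1_d1_le.
- by rewrite t1 s1_d0_le.
rewrite (liftS l3) //; first last.
- exact: s2_d1_le.
- by rewrite Ev -s2_id12 s1_d1_le.
- by rewrite t3 s1_d0_le.
Qed.

Lemma hol_elem p q u : elem_deform p q -> pathK (tag u) p -> hol p u = hol q u.
Proof.
case=> l [r] [c] [-> ->]; rewrite pathK_cat => /andP[Hl /= /andP[/eqP E _]].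
rewrite !hol_cat /= hol_tri //.
by rewrite (hol_tag Hl) E.
Qed.

Lemma hol_hom p q : homotopic p q -> forall u, pathK (tag u) p -> hol p u = hol q u.
Proof.
elim=> {p q} [p q H| p| p q Hpq IH| p q t Hpq IH1 Hqt IH2] u Hp.
- exact: hol_elem.
- by [].
- by rewrite IH //; case: (hom_invariants Hpq (tag u)) => ->.
- rewrite IH1 // IH2 //; by case: (hom_invariants Hpq (tag u)) => <-.
Qed.

Lemma hol_flip b u : tag u = s1_d1 b -> hol1_tag (flip b) (hol1_tag b u) = u.
Proof.
move=> Eu.
have [t1 l1] := hol1_spec Eu.
have [t2 l2] := hol1_spec (b := flip b) (u := hol1_tag b u) t1.
apply: (lift_inj (s := s1_sup b)).
- by rewrite t2 Eu.
- by rewrite t2 s1_d1_le.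
by rewrite l2 l1.
Qed.

Lemma hol_rev s u : pathK (tag u) s -> hol (s ++ revpath s) u = u.
Proof.
elim: s u => [|b s IH] u //= /andP[/eqP E Hs].
rewrite revpath_cons catA hol_cat /=.
have [t1 _] := hol1_spec (esym E).
by rewrite IH ?t1 // hol_flip.
Qed.

Lemma hol_revl s a u : pathK a s -> tag u = endp a s -> hol (revpath s ++ s) u = u.
Proof.
move=> Hs Eu; have [H1 _] := pathK_rev Hs.
rewrite -{2}(revpathK s); apply: hol_rev; by rewrite Eu.
Qed.

Definition trans p a c (x : F a) : F c :=
  tagged_as (Tagged F (0%R : nb_A N c)) (hol p (Tagged F x)).
Arguments trans p a c x : clear implicits.

Lemma tag_Tagged u c (z : F c) : tag u = c -> u = Tagged F (tagged_as (Tagged F z) u).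
Proof. by case: u => a y /= E; subst; rewrite tagged_asE. Qed.

Lemma trans_spec p a c x : pathK a p -> endp a p = c ->
  hol p (Tagged F x) = Tagged F (trans p a c x).
Proof.
move=> Hp Ec; apply: tag_Tagged; by rewrite (hol_tag (u := Tagged F x)).
Qed.

Lemma trans_eq p a c x y : pathK a p -> endp a p = c ->
  hol p (Tagged F x) = Tagged F y -> trans p a c x = y.
Proof. by move=> Hp Ec; rewrite (trans_spec x Hp Ec) => /Tagged_inj. Qed.

Lemma J_iso a b (h : a <= b) : star_iso (J h).
Proof. split; [exact: nb_j_hom| exact: nb_j_bij]. Qed.

Lemma JI_iso a b (h : a <= b) : star_iso (JI h).
Proof. apply: star_iso_inv (J_iso h) _ _ => x; [exact: jinvK'|exact: jinvK]. Qed.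

Lemma hol1_iso b : star_iso (@hol1 _ _ _ N b).
Proof. exact: star_iso_comp (J_iso _) (JI_iso _). Qed.

Lemma trans_iso p : forall a c, pathK a p -> endp a p = c -> star_iso (trans p a c).
Proof.
elim: p => [|b p IH] a c /=.
  move=> _ <-; apply: star_iso_ext (star_iso_id _) => x.
  by rewrite /trans /= tagged_asE.
move=> /andP[/eqP E Hp] Ec; subst a.
have H1 : forall x, trans p (s1_d0 b) c (hol1 x) = trans (b :: p) (s1_d1 b) c x.
  move=> x; symmetry; apply: trans_eq => //=; first by rewrite eqxx.
  by rewrite hol1_tagE; apply: trans_spec.
apply: star_iso_ext H1 _.
exact: star_iso_comp (hol1_iso b) (IH _ _ Hp Ec).
Qed.

Lemma trans_hom p q a c x : homotopic p q -> pathK a p -> endp a p = c ->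
  trans p a c x = trans q a c x.
Proof.
move=> H Hp Ec; have [E1 E2 _] := hom_invariants H a.
symmetry; apply: trans_eq; rewrite -?E1 -?E2 //.
rewrite -(hol_hom H) //; exact: trans_spec.
Qed.

Lemma trans_cat p q a b c x : pathK a p -> endp a p = b -> pathK b q -> endp b q = c ->
  trans (p ++ q) a c x = trans q b c (trans p a b x).
Proof.
move=> Hp Eb Hq Ec; apply: trans_eq.
- by rewrite pathK_cat Hp Eb Hq.
- by rewrite endp_cat Eb.
by rewrite hol_cat (trans_spec _ Hp Eb) (trans_spec _ Hq Ec).
Qed.

Lemma holonomyE (o : K) (g : pi1 o) x : holonomy N o g x = trans (pi1_repr g) o o x.
Proof.
have [/pathftE [_ Hp Ec] _] := repr_spec g.
by rewrite /holonomy (trans_spec x Hp Ec) tagged_asE.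
Qed.

Lemma holonomy_cls (o : K) l x : is_loop o l -> holonomy N o (cls o l) x = trans l o o x.
Proof.
move=> L; have /pathftE [_ Hp Ec] := L.
have [/pathftE [_ Hr Er] _] := repr_spec (cls o l).
rewrite holonomyE; exact: trans_hom (repr_cls L) Hr Er.
Qed.

End Transport.

Arguments trans {d K R} N p a c x.

Section Transport2.
Variables (d : Order.disp_t) (K : porderType d) (R : realType) (N : netbundle K R).
Local Open Scope order_scope.
Local Notation F := (fun o => (nb_A N o : Type)).
Local Notation J h := (@nb_j _ _ _ N _ _ h).
Local Notation JI h := (@nb_jinv _ _ _ N _ _ h).
Local Notation hol := (@hol_path _ _ _ N).

Lemma trans_nil a (x : F a) : trans N [::] a a x = x.
Proof. by rewrite /trans /= tagged_asE. Qed.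

Lemma trans_cons b p c (x : F (s1_d1 b)) : pathK (s1_d0 b) p -> endp (s1_d0 b) p = c ->
  trans N (b :: p) (s1_d1 b) c x = trans N p (s1_d0 b) c (hol1 x).
Proof.
move=> Hp Ec; apply: trans_eq => //=; first by rewrite eqxx.
by rewrite hol1_tagE; apply: trans_spec.
Qed.

Lemma J_refl a (x : F a) : J (lexx a) x = x.
Proof. apply: (@J_inj _ _ _ N _ _ (lexx a)); exact: nb_j_comp. Qed.

Lemma trans_edge a b (h : a <= b) (x : F a) : trans N [:: edge h] a b x = J h x.
Proof.
rewrite (trans_cons (b := edge h)) //= trans_nil /hol1 /=.
apply: (@J_inj _ _ _ N _ _ (lexx b)); by rewrite jinvK J_refl.
Qed.

Lemma trans_back s a c (x : F c) : pathK a s -> endp a s = c ->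
  trans N s a c (trans N (revpath s) c a x) = x.
Proof.
move=> Hs Ec; have [H1 H2] := pathK_rev Hs; rewrite Ec in H1 H2.
rewrite -(trans_cat _ H1 H2 Hs Ec); apply: trans_eq.
- by rewrite pathK_cat H1 H2.
- by rewrite endp_cat H2.
apply: (hol_revl Hs); by rewrite Ec.
Qed.

Lemma trans_back' s a c (x : F a) : pathK a s -> endp a s = c ->
  trans N (revpath s) c a (trans N s a c x) = x.
Proof.
move=> Hs Ec; have [H1 H2] := pathK_rev Hs; rewrite Ec in H1 H2.
have := trans_back x H1 H2; by rewrite revpathK.
Qed.

End Transport2.

Section Morph.
Variables (d : Order.disp_t) (K : porderType d) (R : realType) (N M : netbundle K R).
Local Open Scope order_scope.
Variable phi : forall a, nb_A N a -> nb_A M a.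
Hypothesis Hphi : forall o a (h : a <= o) (x : nb_A N a), phi (nb_j h x) = nb_j h (phi x).

Definition PhiT (u : {a : K & nb_A N a}) : {a : K & nb_A M a} :=
  Tagged (fun a => (nb_A M a : Type)) (phi (tagged u)).

Lemma PhiT_lift u s : PhiT (lift u s) = lift (PhiT u) s.
Proof.
case: u => a x; case: (boolP (a <= s)) => h.
  by rewrite !(liftE _ h) /PhiT /= Hphi.
by rewrite !lift_nle.
Qed.

Lemma PhiT_hol1 b u : PhiT (hol1_tag b u) = hol1_tag b (PhiT u).
Proof.
case: (eqVneq (tag u) (s1_d1 b)) => E; last by rewrite !hol1_tag_ne.
have [t1 l1] := hol1_spec E.
have [t2 l2] := hol1_spec (u := PhiT u) E.
apply: (lift_inj (s := s1_sup b)) => //.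
- by rewrite t2 -t1.
- by rewrite /= t1 s1_d0_le.
by rewrite -PhiT_lift l1 PhiT_lift l2.
Qed.

Lemma PhiT_hol p u : PhiT (hol_path p u) = hol_path p (PhiT u).
Proof. elim: p u => [|b p IH] u //=; by rewrite IH PhiT_hol1. Qed.

Lemma phi_trans p a c x : pathK a p -> endp a p = c ->
  phi (trans N p a c x) = trans M p a c (phi x).
Proof.
move=> Hp Ec; symmetry; apply: trans_eq => //.
have := PhiT_hol p (Tagged (fun a => (nb_A N a : Type)) x); rewrite /PhiT /= => <-.
by rewrite (trans_spec x Hp Ec).
Qed.

Lemma phi_holonomy o g x : phi (holonomy N o g x) = holonomy M o g (phi x).
Proof.
have [/pathftE [_ Hp Ec] _] := repr_spec g.
by rewrite !holonomyE phi_trans.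
Qed.

End Morph.

Section Main.
Variables (d : Order.disp_t) (K : porderType d) (R : realType) (o : K).
Hypothesis Hc : pathwise_connected K.
Local Open Scope order_scope.

Definition sp (a : K) : seq (simplex1 K) :=
  proj1_sig (constructive_indefinite_description _ (Hc o a)).

Lemma sp_spec a : [/\ ~~ nilp (sp a), pathK o (sp a) & endp o (sp a) = a].
Proof. rewrite /sp; case: constructive_indefinite_description => s /= /pathftE. done. Qed.

Lemma sp_rev a : pathK a (revpath (sp a)) /\ endp a (revpath (sp a)) = o.
Proof. have [_ H E] := sp_spec a; have := pathK_rev H; by rewrite E. Qed.

Lemma loop_sp p a c : pathK a p -> endp a p = c -> is_loop o (sp a ++ p ++ revpath (sp c)).
Proof.
move=> Hp Ec; have [n1 H1 E1] := sp_spec a; have [H2 E2] := sp_rev c.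
apply/pathftE; split.
- by case: (sp a) n1.
- by rewrite !pathK_cat H1 E1 Hp Ec H2.
- by rewrite !endp_cat E1 Ec E2.
Qed.

Lemma faithful_lemma (N M : netbundle K R) (phi psi : forall a, nb_A N a -> nb_A M a) :
  nb_morph N M phi -> nb_morph N M psi -> (forall x, phi o x = psi o x) ->
  forall a x, phi a x = psi a x.
Proof.
move=> [_ Hphi] [_ Hpsi] E a x.
have [_ H1 E1] := sp_spec a.
rewrite -(trans_back x H1 E1).
by rewrite (phi_trans Hphi) // (phi_trans Hpsi) // E.
Qed.

Lemma full_lemma (N M : netbundle K R) (eta : nb_A N o -> nb_A M o) :
  dyn_morph (holonomy N o) (holonomy M o) eta ->
  exists phi : forall a, nb_A N a -> nb_A M a,
    [/\ nb_morph N M phi, forall x, phi o x = eta x &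
        bijective eta -> forall a, bijective (phi a)].
Proof.
case=> Heta Heq.
pose phi a (x : nb_A N a) : nb_A M a :=
  trans M (sp a) o a (eta (trans N (revpath (sp a)) a o x)).
exists phi.
have Hph a : star_hom (phi a).
  have [_ H1 E1] := sp_spec a; have [H2 E2] := sp_rev a.
  exact: (star_hom_comp (star_hom_comp (trans_iso N H2 E2).1 Heta) (trans_iso M H1 E1).1).
split.
- split=> // b a h x.
  have [_ Ha Ea] := sp_spec a; have [_ Hb Eb] := sp_spec b.
  have [Ha' Ea'] := sp_rev a; have [Hb' Eb'] := sp_rev b.
  have Hpe : pathK a ([:: edge h] ++ revpath (sp b)).
    by rewrite pathK_cat /= eqxx Hb'.
  have Epe : endp a ([:: edge h] ++ revpath (sp b)) = o by rewrite endp_cat.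
  have L : is_loop o (sp a ++ [:: edge h] ++ revpath (sp b)).
    by apply: loop_sp; rewrite //= eqxx.
  have TN : forall (Q : netbundle K R) (z : nb_A Q o),
      trans Q (sp a ++ [:: edge h] ++ revpath (sp b)) o o z =
      trans Q (revpath (sp b)) b o (nb_j h (trans Q (sp a) o a z)).
    move=> Q z; rewrite (trans_cat _ Ha Ea Hpe Epe).
    rewrite (trans_cat (p := [:: edge h]) (b := b)) ?Hb' ?Eb' //=; last by rewrite eqxx.
    by rewrite trans_edge.
  set y := trans N (revpath (sp a)) a o x.
  have Hx : trans N (sp a) o a y = x by exact: trans_back.
  have LHS : trans N (revpath (sp b)) b o (nb_j h x) = holonomy N o (cls o (sp a ++ [:: edge h] ++ revpath (sp b))) y.
    by rewrite holonomy_cls // TN Hx.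
  rewrite /phi LHS Heq holonomy_cls // TN trans_back //.
- move=> x.
  have [n0 H0 E0] := sp_spec o.
  have L : is_loop o (sp o) by apply/pathftE; split.
  set y := trans N (revpath (sp o)) o o x.
  have Hx : trans N (sp o) o o y = x by exact: trans_back.
  rewrite /phi -/y.
  transitivity (eta (trans N (sp o) o o y)); last by rewrite Hx.
  by rewrite -(holonomy_cls (N := M)) // -Heq holonomy_cls.
- move=> Hb a.
  have [_ H1 E1] := sp_spec a; have [H2 E2] := sp_rev a.
  exact: (bij_comp (trans_iso M H1 E1).2 (bij_comp Hb (trans_iso N H2 E2).2)).
Qed.

Section Surj.
Variables (A : cstar R) (alpha : pi1 o -> A -> A).
Hypothesis Ha : is_dynsys alpha.

Lemma alpha_iso g : star_iso (alpha g). Proof. exact: Ha.1 g. Qed.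
Lemma alpha_mul g h x : alpha (pi1_mul g h) x = alpha g (alpha h x). Proof. exact: Ha.2. Qed.
Lemma alpha_inj g : injective (alpha g). Proof. exact: bij_inj (alpha_iso g).2. Qed.

Lemma hom_srev s : pathK o s -> ~~ nilp s -> homotopic (s ++ revpath s) [:: deg o].
Proof.
case: s => [//|b s] H _; have /andP[/eqP E Hs] := H.
apply: hom_trans (hom_sym (hom_degl [::] (s ++ revpath (b :: s)) b)) _.
have := hom_cancel (s := b :: s) (x := deg o) [::] [::] (a := o) H erefl.
by rewrite cats0 /= E.
Qed.

Lemma alpha_e x : alpha (cls o [:: deg o]) x = x.
Proof.
have L := loop_deg o.
have E : pi1_mul (cls o [:: deg o]) (cls o [:: deg o]) = cls o [:: deg o].
  rewrite mul_cls //; apply: cls_hom (loop_cat L L) _.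
  exact: (hom_degr [::] [::] (deg o)).
apply: (@alpha_inj (cls o [:: deg o])); by rewrite -alpha_mul E.
Qed.

Lemma alpha_srev s x : pathK o s -> ~~ nilp s -> alpha (cls o (s ++ revpath s)) x = x.
Proof.
move=> Hs n; have [H1 H2] := pathK_rev Hs.
have L : is_loop o (s ++ revpath s).
  apply/pathftE; split.
  - by case: s n {Hs H1 H2}.
  - by rewrite pathK_cat Hs H1.
  - by rewrite endp_cat H2.
by rewrite (cls_hom L (hom_srev Hs n)) alpha_e.
Qed.

Definition gam a b (h : a <= b) := cls o (sp a ++ edge h :: revpath (sp b)).

Lemma loop_edge a b (h : a <= b) : is_loop o (sp a ++ edge h :: revpath (sp b)).
Proof. by apply: (loop_sp (p := [:: edge h])); rewrite //= eqxx. Qed.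

Lemma gam_comp a b c (h1 : a <= b) (h2 : b <= c) (h3 : a <= c) x :
  alpha (gam h2) (alpha (gam h1) x) = alpha (gam h3) x.
Proof.
rewrite -alpha_mul /gam mul_cls; [|exact: loop_edge|exact: loop_edge].
have [Hb' _] := sp_rev b.
have := hom_cancel (s := revpath (sp b)) (x := edge h1) (sp a) (edge h2 :: revpath (sp c)) Hb' erefl.
rewrite revpathK => H1.
rewrite (cls_hom (loop_cat (loop_edge h1) (loop_edge h2)) (q := sp a ++ edge h3 :: revpath (sp c))) //.
rewrite -catA /=; apply: hom_trans H1 (hom_tri _ _ h1 h2 h3).
Qed.

Definition Nb : netbundle K R :=
  @NetBundle d K R (fun _ => A) (fun b a h => alpha (gam h))
    (fun b a h => (alpha_iso (gam h)).1)
    (fun b a h => iso_unital (alpha_iso (gam h)).1 (alpha_iso (gam h)).2)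
    (fun b a h => (alpha_iso (gam h)).2)
    (fun c b a h1 h2 h3 x => gam_comp h1 h2 h3 x).

Lemma transN p : forall a c (x : A), pathK a p -> endp a p = c ->
  trans Nb p a c x = alpha (cls o (sp a ++ p ++ revpath (sp c))) x.
Proof.
elim: p => [|b p IH] a c x.
  move=> _ <-; rewrite trans_nil.
  have [n H _] := sp_spec a; by rewrite alpha_srev.
move=> /andP[/eqP E Hp] Ec; subst a.
rewrite trans_cons // IH //.
have LG1 : is_loop o (sp (s1_d1 b) ++ [:: b] ++ revpath (sp (s1_d0 b))).
  by apply: (loop_sp (p := [:: b])); rewrite //= eqxx.
have Lp := loop_sp Hp Ec.
have [H0 _] := sp_rev (s1_d0 b).
have Hh : alpha (cls o (sp (s1_d1 b) ++ [:: b] ++ revpath (sp (s1_d0 b)))) x = hol1 (N := Nb) (b := b) x.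
  apply: (@J_inj _ _ _ Nb _ _ (s1_d0_le b)); rewrite /hol1 jinvK /=.
  rewrite -alpha_mul /gam mul_cls; [|exact: loop_edge|exact: LG1].
  rewrite (cls_hom (loop_cat LG1 (loop_edge _)) (q := sp (s1_d1 b) ++ edge (s1_d1_le b) :: revpath (sp (s1_sup b)))) //.
  have := hom_cancel (s := revpath (sp (s1_d0 b))) (x := b) (sp (s1_d1 b))
    (edge (s1_d0_le b) :: revpath (sp (s1_sup b))) H0 erefl.
  rewrite revpathK -catA /= => H1.
  exact: hom_trans H1 (hom_sup _ _ _ _).
rewrite -Hh -alpha_mul mul_cls //.
rewrite (cls_hom (loop_cat LG1 Lp) (q := sp (s1_d1 b) ++ (b :: p) ++ revpath (sp c))) //.
have := hom_cancel (s := revpath (sp (s1_d0 b))) (x := b) (sp (s1_d1 b))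
  (p ++ revpath (sp c)) H0 erefl.
by rewrite revpathK -catA.
Qed.

Lemma surj_lemma : dyn_iso alpha (holonomy Nb o).
Proof.
have [n0 H0 E0] := sp_spec o.
have Lo : is_loop o (sp o) by apply/pathftE; split.
have [Hr Er] := sp_rev o.
have nr : ~~ nilp (revpath (sp o)).
  by move: n0; rewrite /nilp /revpath size_rev size_map.
have Lr : is_loop o (revpath (sp o)) by apply/pathftE; split.
have Hhol : forall g x, holonomy Nb o g x =
    alpha (cls o (revpath (sp o))) (alpha g (alpha (cls o (sp o)) x)).
  move=> g x; have [Lg _] := repr_spec g; have /pathftE [_ Hg Eg] := Lg.
  rewrite holonomyE transN // -!alpha_mul.
  have Eg' : pi1_mul (cls o (revpath (sp o))) g = cls o (pi1_repr g ++ revpath (sp o)).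
    by rewrite {1}(cls_repr g) mul_cls.
  by rewrite Eg' mul_cls //; apply: loop_cat.
have Hsr : forall x, alpha (cls o (sp o)) (alpha (cls o (revpath (sp o))) x) = x.
  move=> x; rewrite -alpha_mul mul_cls //.
  have := alpha_srev x Hr nr; by rewrite revpathK.
exists (alpha (cls o (revpath (sp o)))); split; last exact: (alpha_iso _).2.
split; first exact: (alpha_iso _).1.
by move=> g x; rewrite Hhol Hsr.
Qed.

End Surj.
End Main.

Theorem proposition3p8 (R : realType) (d : Order.disp_t) (K : porderType d) (o : K) :
  pathwise_connected K ->
  (* the holonomy (A_o, pi_1^o(K), j_* ) of a C*-net bundle is a C*-dynamical system *)
  (forall N : netbundle K R, is_dynsys (holonomy N o)) /\
  (* the assignment is well defined on isomorphism classes ... *)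
  (forall N M : netbundle K R, nb_iso N M -> dyn_iso (holonomy N o) (holonomy M o)) /\
  (* ... injective on isomorphism classes ... *)
  (forall N M : netbundle K R, dyn_iso (holonomy N o) (holonomy M o) -> nb_iso N M) /\
  (* ... and surjective onto isomorphism classes of dynamical systems *)
  (forall (A : cstar R) (alpha : pi1 o -> A -> A),
      is_dynsys alpha -> exists N : netbundle K R, dyn_iso alpha (holonomy N o)) /\
  (* equivalence of categories: phi |-> phi_o is a functor ... *)
  (forall (N M : netbundle K R) (phi : forall a, nb_A N a -> nb_A M a),
      nb_morph N M phi -> dyn_morph (holonomy N o) (holonomy M o) (phi o)) /\
  (* ... which is full ... *)
  (forall (N M : netbundle K R) (eta : nb_A N o -> nb_A M o),
      dyn_morph (holonomy N o) (holonomy M o) eta ->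
      exists phi : forall a, nb_A N a -> nb_A M a,
        nb_morph N M phi /\ forall x, phi o x = eta x) /\
  (* ... and faithful *)
  (forall (N M : netbundle K R) (phi psi : forall a, nb_A N a -> nb_A M a),
      nb_morph N M phi -> nb_morph N M psi -> (forall x, phi o x = psi o x) ->
      forall a x, phi a x = psi a x).
Proof.
move=> Hc.
have Hdyn : forall N : netbundle K R, is_dynsys (holonomy N o).
  move=> N; split.
  - move=> g; have [/pathftE [_ Hp Ep] _] := repr_spec g.
    apply: star_iso_ext (trans_iso N Hp Ep) => x; by rewrite holonomyE.
  - move=> g h x.
    have [/pathftE [_ Hg Eg] _] := repr_spec g.
    have [/pathftE [_ Hh Eh] _] := repr_spec h.
    have [/pathftE [_ Hm Em] _] := repr_spec (pi1_mul g h).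
    rewrite !holonomyE (trans_hom _ (repr_mul g h) Hm Em) (trans_cat _ Hh Eh Hg Eg).
    by [].
have Hfun : forall (N M : netbundle K R) (phi : forall a, nb_A N a -> nb_A M a),
    nb_morph N M phi -> dyn_morph (holonomy N o) (holonomy M o) (phi o).
  move=> N M phi [H1 H2]; split; first exact: H1.
  move=> g x; exact: (phi_holonomy H2).
split; first exact: Hdyn.
split.
  move=> N M [phi [Hm Hb]]; exists (phi o); split; [exact: Hfun | exact: Hb].
split.
  move=> N M [eta [He Hb]]; have [phi [Hm _ Hbij]] := full_lemma Hc He.
  exists phi; split=> //; exact: Hbij.
split.
  move=> A alpha Ha; exists (Nb Hc Ha); exact: surj_lemma.
split; first exact: Hfun.
split.
  move=> N M eta He; have [phi [Hm Ho _]] := full_lemma Hc He; by exists phi.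
exact: faithful_lemma.
Qed.
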